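(* Let $M\preceq\mathbb{C}$ be small, $C\supseteq M$ full, and suppose $\langle A,B\rangle$ is an $M$-f.s. sequence over $C$. Let $B=B_1\sqcup B_2$ be any partition of $B$. Then $\langle A,B_1,B_2\rangle$ is an $M$-f.s. sequence over $C$ if and only if $\langle B_1,B_2\rangle$ is an $M$-f.s. sequence over $C$.
   Context: Work in a monster model $\mathbb{C}$ of an arbitrary complete theory. For $D\supseteq M$, $\mathrm{tp}(X/D)$ is finitely satisfied in $M$ if each of its formulas is satisfied by a tuple from $M$. $C\supseteq M$ is full if every type in $S_n(M)$, for every $n$, is realized in $C$. An $M$-f.s. sequence over $C$ is a sequence of sets $\langle A_i:i\in I\rangle$ with $\mathrm{tp}(A_i/A_{<i}C)$ finitely satisfied in $M$ for every $i$, where $A_{<i}=\bigcup_{j<i}A_j$. *)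

(* Defs.v *)
From Stdlib Require Import List Arith Fin.
Import ListNotations.

Record lang := {
  funs : Type; fun_ar : funs -> nat;
  rels : Type; rel_ar : rels -> nat }.

Inductive term (L : lang) : Type :=
| Var : nat -> term L
| App : forall f : funs L, (Fin.t (fun_ar L f) -> term L) -> term L.

Inductive formula (L : lang) : Type :=
| FEq : term L -> term L -> formula L
| FRel : forall r : rels L, (Fin.t (rel_ar L r) -> term L) -> formula L
| FNeg : formula L -> formula L
| FAnd : formula L -> formula L -> formula L
| FEx : nat -> formula L -> formula L.   (* FEx n phi = exists x_n, phi *)

Arguments Var {L}. Arguments App {L}. Arguments FEq {L}. Arguments FRel {L}.
Arguments FNeg {L}. Arguments FAnd {L}. Arguments FEx {L}.

Record structure (L : lang) (U : Type) := {
  st_inh : inhabited U;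
  st_fun : forall f : funs L, (Fin.t (fun_ar L f) -> U) -> U;
  st_rel : forall r : rels L, (Fin.t (rel_ar L r) -> U) -> Prop }.
Arguments st_fun {L U}. Arguments st_rel {L U}.

Section Sem.
Context {L : lang} {U : Type} (S : structure L U).

Fixpoint eval (s : nat -> U) (t : term L) : U :=
  match t with
  | Var n => s n
  | App f a => st_fun S f (fun i => eval s (a i))
  end.

Definition upd (s : nat -> U) (n : nat) (u : U) : nat -> U :=
  fun k => if Nat.eqb k n then u else s k.

Fixpoint sat_in (P : U -> Prop) (s : nat -> U) (phi : formula L) : Prop :=
  match phi with
  | FEq t1 t2 => eval s t1 = eval s t2
  | FRel r a => st_rel S r (fun i => eval s (a i))
  | FNeg p => ~ sat_in P s p
  | FAnd p q => sat_in P s p /\ sat_in P s q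
  | FEx n p => exists u, P u /\ sat_in P (upd s n u) p
  end.

Definition sat (s : nat -> U) (phi : formula L) : Prop :=
  sat_in (fun _ => True) s phi.

Definition elem_sub (M : U -> Prop) : Prop :=
  (exists m, M m) /\
  (forall f (a : Fin.t (fun_ar L f) -> U), (forall i, M (a i)) -> M (st_fun S f a)) /\
  (forall (phi : formula L) (s : nat -> U), (forall k, M (s k)) ->
     (sat s phi <-> sat_in M s phi)).

Definition override (n : nat) (e s : nat -> U) : nat -> U :=
  fun k => if Nat.ltb k n then e k else s k.

(* A set of formulas in the variables x_0..x_{n-1} with parameters
   (the values of the other variables) from A. *)
Definition params_in (A : U -> Prop) (p : (formula L * (nat -> U)) -> Prop) :=
  forall phi s, p (phi, s) -> forall k, A (s k).

Definition realizes_n (n : nat) (e : nat -> U) (p : (formula L * (nat -> U)) -> Prop) :=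
  forall phi s, p (phi, s) -> sat (override n e s) phi.

(* consistent = finitely satisfiable in S (equivalently consistent with the
   elementary diagram, since the parameters live in a subset of S) *)
Definition fin_sat_n (n : nat) (p : (formula L * (nat -> U)) -> Prop) :=
  forall l : list (formula L * (nat -> U)), (forall x, In x l -> p x) ->
    exists e, forall phi s, In (phi, s) l -> sat (override n e s) phi.

Definition complete_type (M : U -> Prop) (n : nat) p :=
  params_in M p /\ fin_sat_n n p /\
  (forall phi s, (forall k, M (s k)) -> p (phi, s) \/ p (FNeg phi, s)).

Definition full (M C : U -> Prop) : Prop :=
  forall n p, complete_type M n p ->
    exists e, (forall k, k < n -> C (e k)) /\ realizes_n n e p.

(* tp(X/D) is finitely satisfied in M: whenever phi(x-bar, d-bar) holds with
   the variables in V assigned elements of X and all other variables assigned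
   parameters from D, then some tuple from M (assigned to the variables in V)
   also satisfies phi(x-bar, d-bar). *)
Definition fs_in (M X D : U -> Prop) : Prop :=
  forall (phi : formula L) (s : nat -> U) (V : list nat),
    (forall v, In v V -> X (s v)) ->
    (forall v, ~ In v V -> D (s v)) ->
    sat s phi ->
    exists s', (forall v, In v V -> M (s' v)) /\
               (forall v, ~ In v V -> s' v = s v) /\ sat s' phi.

(* <A_0, ..., A_k> (a finite sequence of sets) is an M-f.s. sequence over C:
   tp(A_i / A_{<i} C) is finitely satisfied in M for every i. *)
Fixpoint fs_seq_from (M prev : U -> Prop) (l : list (U -> Prop)) : Prop :=
  match l with
  | [] => True
  | A :: l' => fs_in M A prev /\
               fs_seq_from M (fun u => prev u \/ A u) l'
  end.

Definition fs_seq (M C : U -> Prop) (l : list (U -> Prop)) : Prop :=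
  fs_seq_from M C l.

(* Cardinalities, with a cardinal represented by a type K. *)
Definition card_lt (X : U -> Prop) (K : Type) : Prop :=
  (exists f : {x | X x} -> K, forall a b, f a = f b -> a = b) /\
  ~ (exists g : K -> {x | X x}, forall a b, g a = g b -> a = b).

Definition saturated (K : Type) : Prop :=
  forall (A : U -> Prop) p, card_lt A K -> params_in A p -> fin_sat_n 1 p ->
    exists e, realizes_n 1 e p.

Definition automorphism (g : U -> U) : Prop :=
  (forall a b, g a = g b -> a = b) /\ (forall b, exists a, g a = b) /\
  (forall f a, g (st_fun S f a) = st_fun S f (fun i => g (a i))) /\
  (forall r a, st_rel S r a <-> st_rel S r (fun i => g (a i))).

Definition homogeneous (K : Type) : Prop :=
  forall (A : U -> Prop) (h : U -> U), card_lt A K ->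
    (forall phi (s : nat -> U), (forall k, A (s k)) ->
       (sat s phi <-> sat (fun k => h (s k)) phi)) ->
    exists g, automorphism g /\ forall a, A a -> g a = h a.

End Sem.

Definition small {U} (K : Type) (X : U -> Prop) := card_lt X K.

(* S is a monster model with respect to the (infinite, > |L|) cardinal |K|. *)
Definition monster {L U} (S : structure L U) (K : Type) : Prop :=
  (exists f : nat -> K, forall a b, f a = f b -> a = b) /\
  (exists f : funs L -> K, forall a b, f a = f b -> a = b) /\
  (exists f : rels L -> K, forall a b, f a = f b -> a = b) /\
  saturated S K /\ homogeneous S K.

Definition disj_union {U} (B B1 B2 : U -> Prop) : Prop :=
  (forall u, B u <-> B1 u \/ B2 u) /\ (forall u, B1 u -> B2 u -> False).

(* Main.v *)
Require Import Defs.
From Stdlib Require Import List Arith Lia Classical ClassicalEpsilon FunctionalExtensionality.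
Import ListNotations.

Fixpoint fin_max (n : nat) : (Fin.t n -> nat) -> nat :=
  match n with
  | 0 => fun _ => 0
  | S n' => fun g => Nat.max (g Fin.F1) (fin_max n' (fun i => g (Fin.FS i)))
  end.

Lemma fin_max_ge n (i : Fin.t n) : forall (g : Fin.t n -> nat), g i <= fin_max n g.
Proof.
  induction i; intros g; simpl.
  - lia.
  - specialize (IHi (fun j => g (Fin.FS j))). simpl in IHi. lia.
Qed.

Fixpoint tbound {L} (t : term L) : nat :=
  match t with
  | Var n => S n
  | App f a => fin_max _ (fun i => tbound (a i))
  end.

Fixpoint fbound {L} (phi : formula L) : nat :=
  match phi with
  | FEq t1 t2 => Nat.max (tbound t1) (tbound t2)
  | FRel r a => fin_max _ (fun i => tbound (a i))
  | FNeg p => fbound p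
  | FAnd p q => Nat.max (fbound p) (fbound q)
  | FEx n p => fbound p
  end.

Lemma eval_coinc {L U} (S : structure L U) (t : term L) :
  forall s s', (forall k, k < tbound t -> s k = s' k) -> eval S s t = eval S s' t.
Proof.
  induction t as [n|f a IH]; intros s s' H; simpl in *.
  - apply H; lia.
  - f_equal. apply functional_extensionality. intros i. apply IH.
    intros k Hk. apply H. pose proof (fin_max_ge _ i (fun i => tbound (a i))). simpl in *. lia.
Qed.

Lemma sat_coinc {L U} (S : structure L U) (phi : formula L) :
  forall P s s', (forall k, k < fbound phi -> s k = s' k) ->
  (sat_in S P s phi <-> sat_in S P s' phi).
Proof.
  induction phi as [t1 t2|r a|p IH|p IHp q IHq|n p IH]; intros P s s' H; simpl in *.
  - rewrite (eval_coinc S t1 s s'), (eval_coinc S t2 s s'); [tauto| |];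
      intros k Hk; apply H; lia.
  - replace (fun i => eval S s (a i)) with (fun i => eval S s' (a i)); [tauto|].
    apply functional_extensionality; intros i. symmetry. apply eval_coinc.
    intros k Hk. apply H. pose proof (fin_max_ge _ i (fun i => tbound (a i))). simpl in *. lia.
  - rewrite (IH P s s' H). tauto.
  - rewrite (IHp P s s'), (IHq P s s'); [tauto| |]; intros k Hk; apply H; lia.
  - split; intros [u [Pu Hu]]; exists u; split; auto.
    + refine (proj1 (IH P (upd s n u) (upd s' n u) _) Hu).
      intros k Hk; unfold upd; destruct (Nat.eqb k n); auto.
    + refine (proj2 (IH P (upd s n u) (upd s' n u) _) Hu).
      intros k Hk; unfold upd; destruct (Nat.eqb k n); auto.
Qed.

Lemma sat_coinc' {L U} (S : structure L U) (phi : formula L) s s' :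
  (forall k, k < fbound phi -> s k = s' k) -> sat S s phi -> sat S s' phi.
Proof. intros H. unfold sat. apply (sat_coinc S phi _ s s' H). Qed.

Fixpoint subst_list {L} (ks : list nat) (off : nat) (phi : formula L) : formula L :=
  match ks with
  | [] => phi
  | k :: ks' => FEx k (FAnd (FEq (Var k) (Var (off + k))) (subst_list ks' off phi))
  end.

Definition inb (V : list nat) (k : nat) : bool :=
  if in_dec Nat.eq_dec k V then true else false.

Lemma inb_true V k : inb V k = true <-> In k V.
Proof. unfold inb; destruct (in_dec Nat.eq_dec k V); split; congruence || tauto. Qed.
Lemma inb_false V k : inb V k = false <-> ~ In k V.
Proof. unfold inb; destruct (in_dec Nat.eq_dec k V); split; congruence || tauto. Qed.

Lemma inb_cases V j : (inb V j = true /\ In j V) \/ (inb V j = false /\ ~In j V).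
Proof. unfold inb; destruct (in_dec Nat.eq_dec j V); tauto. Qed.

Lemma sat_sub {L U} (S : structure L U) (phi : formula L) off : forall ks s,
  (forall k, In k ks -> k < off) ->
  (sat S s (subst_list ks off phi) <->
   sat S (fun j => if inb ks j then s (off + j) else s j) phi).
Proof.
  induction ks as [|k ks IH]; intros s Hks; simpl.
  - split; apply sat_coinc'; intros j _; reflexivity.
  - unfold sat at 1; simpl. fold (sat S).
    assert (Hk : k < off) by (apply Hks; simpl; auto).
    assert (E : forall u j, k < off -> upd s k u (off + j) = s (off + j)).
    { intros u j _. unfold upd. destruct (Nat.eqb_spec (off + j) k); [lia|auto]. }
    split.
    + intros [u [_ [Heq Hs]]]. simpl in Heq. rewrite E in Heq by lia.
      unfold upd at 1 in Heq. rewrite Nat.eqb_refl in Heq. subst u.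
      apply IH in Hs; [|intros; apply Hks; simpl; auto].
      revert Hs. apply sat_coinc'. intros j _.
      cbv beta; destruct (inb_cases ks j) as [[-> Hi]|[-> Hi]];
      destruct (inb_cases (k::ks) j) as [[-> Hi']|[-> Hi']]; simpl in Hi'.
      * rewrite E by lia. reflexivity.
      * exfalso; tauto.
      * unfold upd. destruct (Nat.eqb_spec j k); [subst; reflexivity|].
        exfalso; destruct Hi'; congruence.
      * unfold upd. destruct (Nat.eqb_spec j k); [subst; exfalso; tauto|reflexivity].
    + intros Hs. exists (s (off + k)). split; [exact I|]. split.
      * simpl. rewrite E by lia. unfold upd; rewrite Nat.eqb_refl. reflexivity.
      * apply IH; [intros; apply Hks; simpl; auto|].
        revert Hs. apply sat_coinc'. intros j _.
        cbv beta; destruct (inb_cases ks j) as [[-> Hi]|[-> Hi]];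
      destruct (inb_cases (k::ks) j) as [[-> Hi']|[-> Hi']]; simpl in Hi'.
        -- rewrite E by lia. reflexivity.
        -- exfalso; tauto.
        -- unfold upd. destruct (Nat.eqb_spec j k); [subst; reflexivity|].
           exfalso; destruct Hi'; congruence.
        -- unfold upd. destruct (Nat.eqb_spec j k); [subst; exfalso; tauto|reflexivity].
Qed.

Definition mix {U} (q : nat -> bool) (s r : nat -> U) : nat -> U :=
  fun k => if q k then s k else r k.

Definition equiv_on {L U} (S : structure L U) (M : U -> Prop) (q : nat -> bool) (s1 s2 : nat -> U) :=
  forall phi r, (forall k, q k = false -> M (r k)) ->
    (sat S (mix q s1 r) phi <-> sat S (mix q s2 r) phi).

Lemma equiv_sym {L U} (S : structure L U) M q s1 s2 :
  equiv_on S M q s1 s2 -> equiv_on S M q s2 s1.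
Proof. intros H phi r Hr. rewrite (H phi r Hr). tauto. Qed.

Lemma equiv_ext {L U} (S : structure L U) M q s1 s2 t1 t2 :
  equiv_on S M q s1 s2 -> (forall k, q k = true -> s1 k = t1 k) ->
  (forall k, q k = true -> s2 k = t2 k) -> equiv_on S M q t1 t2.
Proof.
  intros H H1 H2 phi r Hr.
  assert (E1 : forall k, k < fbound phi -> mix q s1 r k = mix q t1 r k).
  { intros k _; unfold mix; destruct (q k) eqn:E; auto. }
  assert (E2 : forall k, k < fbound phi -> mix q s2 r k = mix q t2 r k).
  { intros k _; unfold mix; destruct (q k) eqn:E; auto. }
  unfold sat. rewrite <- (sat_coinc S phi _ _ _ E1), <- (sat_coinc S phi _ _ _ E2).
  apply H; auto.
Qed.

Lemma In_le_max W k : In k W -> k <= list_max W.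
Proof.
  intros H. assert (HF : Forall (fun x => x <= list_max W) W) by (apply list_max_le; lia).
  rewrite Forall_forall in HF. auto.
Qed.

Lemma realize {L U} (S : structure L U) (M C : U -> Prop) N (q : nat -> bool) s :
  (exists m, M m) -> full S M C -> (forall k, q k = true -> k < N) ->
  exists e, (forall k, q k = true -> C (e k)) /\ equiv_on S M q s e.
Proof.
  intros [m0 Hm0] Hfull HqN.
  set (e0 := mix q s (fun _ => m0)).
  set (p := fun x : formula L * (nat -> U) =>
              (forall k, M (snd x k)) /\ sat S (override N e0 (snd x)) (fst x)).
  assert (Hct : complete_type S M N p).
  { split; [|split].
    - intros phi t [Hm _] k. exact (Hm k).
    - intros l Hl. exists e0. intros phi t Hin. destruct (Hl _ Hin) as [_ H]. exact H.
    - intros phi t Ht. destruct (classic (sat S (override N e0 t) phi)) as [H|H];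
        [left|right]; split; simpl; auto. }
  destruct (Hfull N p Hct) as [e [HC Hreal]].
  exists e. split; [intros k Hk; apply HC; auto|].
  assert (Key : forall f phi r, (forall k, q k = false -> M (r k)) ->
     let Bd := fbound phi in let off := N + Bd + 1 in
     let ks := filter (fun k => negb (q k)) (seq 0 N) in
     let t := fun j => if j <? N then m0 else if j <? off then r j
                       else if q (j - off) then m0 else r (j - off) in
     (forall j, M (t j)) /\
     (sat S (override N f t) (subst_list ks off phi) <-> sat S (mix q f r) phi)).
  { intros f phi r Hr Bd off ks t. split.
    - intros j. unfold t. destruct (Nat.ltb_spec j N); auto.
      destruct (Nat.ltb_spec j off).
      + apply Hr. destruct (q j) eqn:E; auto. apply HqN in E. lia.
      + destruct (q (j - off)) eqn:E; auto.
    - rewrite sat_sub.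
      2:{ intros k Hk. unfold ks in Hk. apply filter_In in Hk as [Hk _].
          apply in_seq in Hk. lia. }
      unfold sat. apply sat_coinc. intros j Hj. unfold override, mix.
      destruct (inb_cases ks j) as [[-> Hi]|[-> Hi]].
      + unfold ks in Hi. apply filter_In in Hi as [Hi Hq]. apply in_seq in Hi.
        destruct (q j) eqn:Eqj; [discriminate|].
        destruct (Nat.ltb_spec (off + j) N); [lia|]. unfold t.
        destruct (Nat.ltb_spec (off + j) N); [lia|].
        destruct (Nat.ltb_spec (off + j) off); [lia|].
        replace (off + j - off) with j by lia. rewrite Eqj. reflexivity.
      + destruct (Nat.ltb_spec j N).
        * destruct (q j) eqn:E; auto. exfalso. apply Hi. unfold ks.
          apply filter_In. split; [apply in_seq; lia| rewrite E; reflexivity].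
        * unfold t. destruct (Nat.ltb_spec j N); [lia|].
          destruct (Nat.ltb_spec j off); [|unfold off, Bd in *; lia].
          destruct (q j) eqn:E; auto. apply HqN in E. lia. }
  intros phi r Hr.
  destruct (Key e0 phi r Hr) as [Ht K0]. destruct (Key e phi r Hr) as [_ K1].
  simpl in K0, K1.
  set (t := fun j => if j <? N then m0 else if j <? N + fbound phi + 1 then r j
                       else if q (j - (N + fbound phi + 1)) then m0 else r (j - (N + fbound phi + 1))) in *.
  set (th := subst_list (filter (fun k => negb (q k)) (seq 0 N)) (N + fbound phi + 1) phi) in *.
  assert (Hs : sat S (mix q s r) phi <-> sat S (mix q e0 r) phi).
  { unfold sat; apply sat_coinc. intros k _. unfold e0, mix. destruct (q k); reflexivity. }
  rewrite Hs, <- K0, <- K1.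
  split.
  - intros H. apply (Hreal th t). split; auto.
  - intros H. destruct (classic (sat S (override N e0 t) th)) as [H'|H']; auto.
    exfalso. assert (HN : p (FNeg th, t)) by (split; auto).
    apply Hreal in HN. apply HN. exact H.
Qed.

Lemma invariance {L U} (S : structure L U) (M X D : U -> Prop) (q : nat -> bool)
  (W : list nat) s s' phi :
  (exists m, M m) -> fs_in S M X D -> (forall u, M u -> D u) -> equiv_on S M q s s' ->
  (forall k, q k = false -> s k = s' k) ->
  (forall k, q k = true -> D (s k) /\ D (s' k)) ->
  (forall k, In k W -> q k = false /\ X (s k)) ->
  (forall k, q k = false -> ~ In k W -> M (s k)) ->
  sat S s phi -> sat S s' phi.
Proof.
  intros [m0 Hm0] Hfs HMD Heq Hoff Hq HW HM Hs.
  destruct (classic (sat S s' phi)) as [H|Hn]; auto. exfalso.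
  set (Bd := fbound phi). set (off := Bd + list_max W + 1).
  set (qs := filter q (seq 0 Bd)).
  set (chi := FAnd phi (FNeg (subst_list qs off phi))).
  set (s2 := fun j => if j <? off then s j else if q (j - off) then s' (j - off) else s j).
  assert (Hqs : forall k, In k qs -> q k = true /\ k < Bd).
  { intros k Hk. unfold qs in Hk. apply filter_In in Hk as [Hk Hk'].
    apply in_seq in Hk. split; auto; lia. }
  assert (Hsub : forall t g, (forall j, In j qs -> t (off + j) = g j) ->
             (forall j, j < Bd -> q j = false -> t j = g j) ->
             sat S t (subst_list qs off phi) <-> sat S g phi).
  { intros t g H1 H2. rewrite sat_sub.
    2:{ intros k Hk. apply Hqs in Hk. unfold off. lia. }
    unfold sat; apply sat_coinc. intros j Hj.
    destruct (inb_cases qs j) as [[-> Hi]|[-> Hi]]; auto.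
    apply H2; auto. destruct (q j) eqn:E; auto. exfalso; apply Hi.
    unfold qs. apply filter_In; split; auto. apply in_seq; lia. }
  assert (Hchi : sat S s2 chi).
  { unfold sat, chi; simpl. fold (sat S s2 phi). fold (sat S s2 (subst_list qs off phi)). split.
    - revert Hs. apply sat_coinc'. intros k Hk. unfold s2.
      destruct (Nat.ltb_spec k off); [reflexivity|]. unfold Bd, off in *; lia.
    - intros Hc. apply Hn. refine (proj1 (Hsub s2 s' _ _) Hc).
      + intros j Hj. unfold s2. destruct (Nat.ltb_spec (off + j) off); [lia|].
        replace (off + j - off) with j by lia. apply Hqs in Hj. destruct Hj as [-> _]. reflexivity.
      + intros j Hj E. unfold s2. destruct (Nat.ltb_spec j off); [|unfold off in *; lia].
        auto. }
  destruct (Hfs chi s2 W) as [s3 [H3W [H3o H3s]]].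
  - intros v Hv. unfold s2. pose proof (In_le_max W v Hv).
    destruct (Nat.ltb_spec v off); [|unfold off in *; lia]. apply HW; auto.
  - intros v Hv. unfold s2. destruct (Nat.ltb_spec v off).
    + destruct (q v) eqn:E; [apply Hq; auto|apply HMD; apply HM; auto].
    + destruct (q (v - off)) eqn:E; [apply Hq; auto|].
      destruct (q v) eqn:E'; [apply Hq; auto|]. apply HMD, HM; auto;
      try (intros Hin; pose proof (In_le_max W v Hin); unfold off in *; lia).
  - exact Hchi.
  - unfold sat, chi in H3s; simpl in H3s. destruct H3s as [H3a H3b].
    fold (sat S s3 phi) in H3a. fold (sat S s3 (subst_list qs off phi)) in H3b.
    set (r := fun k => if k <? Bd then s3 k else m0).
    assert (Hr : forall k, q k = false -> M (r k)).
    { intros k E. unfold r. destruct (Nat.ltb_spec k Bd); auto.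
      destruct (in_dec Nat.eq_dec k W) as [Hi|Hi]; auto.
      rewrite H3o by auto. unfold s2. destruct (Nat.ltb_spec k off); [|unfold off in *; lia].
      apply HM; auto. }
    assert (A1 : sat S (mix q s r) phi).
    { revert H3a. apply sat_coinc'. intros k Hk. unfold mix, r.
      destruct (q k) eqn:E.
      - rewrite H3o. unfold s2. destruct (Nat.ltb_spec k off); [reflexivity|unfold off,Bd in *; lia].
        intros Hi. apply HW in Hi. destruct Hi; congruence.
      - destruct (Nat.ltb_spec k Bd); [reflexivity|unfold Bd in *; lia]. }
    apply (Heq phi r Hr) in A1.
    apply H3b. rewrite (Hsub s3 (mix q s' r)); auto.
    + intros j Hj. rewrite H3o.
      * unfold s2, mix. destruct (Nat.ltb_spec (off + j) off); [lia|].
        replace (off + j - off) with j by lia. apply Hqs in Hj. destruct Hj as [-> _]. reflexivity.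
      * intros Hi. pose proof (In_le_max W _ Hi). unfold off in *; lia.
    + intros j Hj E. unfold mix, r. rewrite E. destruct (Nat.ltb_spec j Bd); [reflexivity|lia].
Qed.

Local Open Scope bool_scope.

Definition pb {U} (P : U -> Prop) (u : U) : bool :=
  if excluded_middle_informative (P u) then true else false.

Lemma pb_cases {U} (P : U -> Prop) u : (pb P u = true /\ P u) \/ (pb P u = false /\ ~ P u).
Proof. unfold pb; destruct (excluded_middle_informative (P u)); tauto. Qed.

Lemma fs_mono {L U} (S : structure L U) M X D X' D' :
  fs_in S M X D -> (forall u, X' u -> X u) -> (forall u, D' u -> D u) -> fs_in S M X' D'.
Proof.
  intros H HX HD phi s V H1 H2 H3. apply H; auto.
Qed.

Lemma hard {L U} (S : structure L U) (M C A B B1 B2 : U -> Prop) :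
  (exists m, M m) -> full S M C -> (forall u, M u -> C u) ->
  fs_in S M B (fun u => C u \/ A u) -> fs_in S M B2 (fun u => C u \/ B1 u) ->
  (forall u, B1 u -> B u) -> (forall u, B2 u -> B u) ->
  fs_in S M B2 (fun u => (C u \/ A u) \/ B1 u).
Proof.
  intros [m0 Hm0] Hfull HMC H2 H4 HB1 HB2 phi s V HV Hnv Hsat.
  set (N := fbound phi).
  set (ac := fun k => negb (inb V k) && (k <? N) && negb (pb B1 (s k))).
  assert (Hac : forall k, ac k = true <-> ~ In k V /\ k < N /\ ~ B1 (s k)).
  { intros k. unfold ac. destruct (inb_cases V k) as [[-> Hi]|[-> Hi]];
    destruct (pb_cases B1 (s k)) as [[-> Hb]|[-> Hb]];
    destruct (Nat.ltb_spec k N); simpl; split; intuition (try discriminate; try lia). }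
  assert (Hacf : forall k, ac k = false <-> In k V \/ N <= k \/ B1 (s k)).
  { intros k. destruct (ac k) eqn:E.
    - apply Hac in E. split; [discriminate|]. intros [Hx|[Hx|Hx]]; exfalso; intuition lia.
    - split; [|auto]. intros _. destruct (in_dec Nat.eq_dec k V); auto.
      destruct (Nat.le_gt_cases N k); auto. destruct (classic (B1 (s k))); auto.
      assert (ac k = true) by (apply Hac; auto). congruence. }
  destruct (realize S M C N ac s (ex_intro _ m0 Hm0) Hfull) as [e [HeC Heq]].
  { intros k Hk. apply Hac in Hk. tauto. }
  set (s0 := fun k => if inb V k then s k else if k <? N then s k else m0).
  set (s1 := fun k => if ac k then e k else s0 k).
  set (B1l := filter (fun k => negb (inb V k) && pb B1 (s k)) (seq 0 N)).
  assert (HB1l : forall k, In k B1l <-> ~ In k V /\ k < N /\ B1 (s k)).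
  { intros k. unfold B1l. rewrite filter_In, in_seq.
    destruct (inb_cases V k) as [[-> Hi]|[-> Hi]];
    destruct (pb_cases B1 (s k)) as [[-> Hb]|[-> Hb]]; simpl;
    intuition (try discriminate; try lia). }
  assert (Hs0 : sat S s0 phi).
  { revert Hsat. apply sat_coinc'. intros k Hk. unfold s0. destruct (inb V k); auto.
    destruct (Nat.ltb_spec k N); [reflexivity|]. exfalso. assert (N = fbound phi) by reflexivity. lia. }
  assert (Hs1 : sat S s1 phi).
  { apply (invariance S M B (fun u => C u \/ A u) ac (V ++ B1l) s0 s1 phi).
    - exists m0; auto.
    - exact H2.
    - intros u Hu; left; auto.
    - apply (equiv_ext S M ac s e); auto.
      + intros k Hk; apply Hac in Hk; unfold s0; destruct Hk as [Hv [Hk _]].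
        rewrite (proj2 (inb_false V k) Hv). destruct (Nat.ltb_spec k N); [reflexivity|lia].
      + intros k Hk; unfold s1; rewrite Hk; reflexivity.
    - intros k Hk; unfold s1; rewrite Hk; reflexivity.
    - intros k Hk. pose proof Hk as Hk'. apply Hac in Hk' as [Hv [HkN Hb]].
      unfold s1; rewrite Hk. split; [|left; apply HeC; auto].
      unfold s0. rewrite (proj2 (inb_false V k) Hv). destruct (Nat.ltb_spec k N); [|lia].
      destruct (Hnv k Hv) as [Hx|Hx]; [exact Hx|contradiction].
    - intros k Hk. apply in_app_or in Hk as [Hk|Hk].
      + split. apply Hacf; auto. unfold s0. rewrite (proj2 (inb_true V k) Hk). apply HB2, HV, Hk.
      + apply HB1l in Hk as [Hv [HkN Hb]]. split. apply Hacf; auto. unfold s0.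
        rewrite (proj2 (inb_false V k) Hv). destruct (Nat.ltb_spec k N); [|lia]. auto.
    - intros k Hk Hn. apply Hacf in Hk. unfold s0.
      destruct (inb_cases V k) as [[-> Hi]|[-> Hi]]; [exfalso; apply Hn; apply in_or_app; auto|].
      destruct (Nat.ltb_spec k N); auto. exfalso. apply Hn, in_or_app; right; apply HB1l.
      destruct Hk as [Hx|[Hx|Hx]]; [contradiction|lia|auto].
    - exact Hs0. }
  destruct (H4 phi s1 V) as [s2 [H2V [H2o H2s]]].
  - intros v Hv. unfold s1. assert (Hv0 : ac v = false) by (apply Hacf; auto). rewrite Hv0.
    unfold s0. rewrite (proj2 (inb_true V v) Hv). auto.
  - intros v Hv. unfold s1. destruct (ac v) eqn:E; [left; apply HeC; auto|].
    unfold s0. rewrite (proj2 (inb_false V v) Hv). destruct (Nat.ltb_spec v N); [|left; auto].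
    right. apply Hacf in E. destruct E as [E|[E|E]]; [contradiction|lia|exact E].
  - exact Hs1.
  - set (s3 := fun k => if inb V k then s2 k else s0 k).
    assert (Hs3 : sat S s3 phi).
    { apply (invariance S M B (fun u => C u \/ A u) ac B1l s2 s3 phi).
      - exists m0; auto.
      - exact H2.
      - intros u Hu; left; auto.
      - apply (equiv_ext S M ac e s); [apply equiv_sym; auto| |].
        + intros k Hk. pose proof Hk as Hk'. apply Hac in Hk' as [Hv [HkN _]].
          rewrite (H2o k Hv). unfold s1. rewrite Hk. reflexivity.
        + intros k Hk. apply Hac in Hk as [Hv [HkN _]]. unfold s3.
          rewrite (proj2 (inb_false V k) Hv). unfold s0. rewrite (proj2 (inb_false V k) Hv).
          destruct (Nat.ltb_spec k N); [reflexivity|lia].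
      - intros k Hk. unfold s3. destruct (inb_cases V k) as [[-> Hi]|[-> Hi]]; auto.
        rewrite (H2o k Hi). unfold s1. rewrite Hk. reflexivity.
      - intros k Hk. pose proof Hk as Hk'. apply Hac in Hk' as [Hv [HkN Hb]].
        rewrite (H2o k Hv). unfold s1, s3. rewrite Hk, (proj2 (inb_false V k) Hv).
        split; [left; apply HeC; auto|]. unfold s0. rewrite (proj2 (inb_false V k) Hv).
        destruct (Nat.ltb_spec k N); [|lia]. destruct (Hnv k Hv) as [Hx|Hx]; [exact Hx|contradiction].
      - intros k Hk. pose proof Hk as Hk'. apply HB1l in Hk' as [Hv [HkN Hb]].
        split; [apply Hacf; auto|]. rewrite (H2o k Hv). unfold s1.
        rewrite (proj2 (Hacf k) (or_intror (or_intror Hb))). unfold s0.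
        rewrite (proj2 (inb_false V k) Hv). destruct (Nat.ltb_spec k N); [|lia]. auto.
      - intros k Hk Hn. destruct (inb_cases V k) as [[_ Hi]|[_ Hi]]; [apply H2V; auto|].
        rewrite (H2o k Hi). unfold s1. rewrite Hk. unfold s0. rewrite (proj2 (inb_false V k) Hi).
        destruct (Nat.ltb_spec k N); auto. exfalso. apply Hn, HB1l. apply Hacf in Hk.
        destruct Hk as [Hx|[Hx|Hx]]; [contradiction|lia|auto].
      - exact H2s. }
    exists (fun k => if inb V k then s2 k else s k). split; [|split].
    + intros v Hv. rewrite (proj2 (inb_true V v) Hv). auto.
    + intros v Hv. rewrite (proj2 (inb_false V v) Hv). auto.
    + revert Hs3. apply sat_coinc'. intros k Hk. unfold s3, s0. destruct (inb V k); auto.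
      destruct (Nat.ltb_spec k N); [reflexivity|]. exfalso. assert (N = fbound phi) by reflexivity. lia.
Qed.

Theorem lemma2 (L : lang) (U : Type) (S : structure L U) (K : Type)
  (Hmon : monster S K)
  (M C A B B1 B2 : U -> Prop)
  (HM : elem_sub S M) (HMsmall : small K M)
  (HMC : forall u, M u -> C u) (Hfull : full S M C)
  (HAB : fs_seq S M C [A; B])
  (Hpart : disj_union B B1 B2) :
  fs_seq S M C [A; B1; B2] <-> fs_seq S M C [B1; B2].
Proof.
  destruct HM as [Hne _]. destruct Hpart as [HB _].
  unfold fs_seq in *; simpl in *. destruct HAB as [HA [HBf _]].
  assert (HB1 : forall u, B1 u -> B u) by (intros u Hu; apply HB; auto).
  assert (HB2 : forall u, B2 u -> B u) by (intros u Hu; apply HB; auto).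
  split.
  - intros [_ [H1 [H2 _]]]. split; [|split; [|exact I]].
    + apply (fs_mono S M B1 (fun u => C u \/ A u)); auto.
    + apply (fs_mono S M B2 (fun u => (C u \/ A u) \/ B1 u)); auto. tauto.
  - intros [H1 [H2 _]]. split; [exact HA|]. split.
    + apply (fs_mono S M B (fun u => C u \/ A u)); auto.
    + split; [|exact I]. apply (hard S M C A B B1 B2); auto.
Qed.
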